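(* Let $1\le d<n$ be integers and $X=P(d,n)$. Then there exists a family $\mathcal{F}_X$ of functions $\phi:V(X)\to\{-1,0,1\}$ such that: (i) for every $\phi\in\mathcal{F}_X$, both $-1$ and $1$ lie in the image of $\phi$; (ii) for every $\phi\in\mathcal{F}_X$ and every maximal clique $K$ of $X$, $\sum_{v\in V(K)}\phi(v)=0$; (iii) viewing each $\phi$ as a vector in $\mathbb{R}^{V(X)}$, $\mathcal{F}_X$ contains a linearly independent subset of cardinality $\binom{n-1}{d}$.
   Context: For integers $1\le d\le n$, let $S_{d,n}$ be the set of all $d$-tuples with entries in $[n]=\{1,\dots,n\}$ and pairwise distinct entries. The partial permutation graph $P(d,n)$ has vertex set $S_{d,n}$, two $d$-tuples being adjacent if and only if they differ in exactly one coordinate. *)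

(* Defs.v *)
From HB Require Import structures.
From mathcomp Require Import all_boot all_order all_algebra.
Set Implicit Arguments. Unset Strict Implicit. Unset Printing Implicit Defensive.
Import Order.TTheory GRing.Theory Num.Theory.

(* Vertex set S_{d,n}: d-tuples over [n] (encoded as 'I_n = {0..n-1})
   with pairwise distinct entries. *)
Definition ppvert (d n : nat) : finType := {t : d.-tuple 'I_n | uniq t}.

Definition pp_adj (d n : nat) (x y : ppvert d n) : bool :=
  #|[pred i : 'I_d | tnth (val x) i != tnth (val y) i]| == 1%N.

Definition pp_clique (d n : nat) (K : {set ppvert d n}) : bool :=
  [forall x in K, forall y in K, (x != y) ==> pp_adj x y].

Definition pp_maxclique (d n : nat) (K : {set ppvert d n}) : bool :=
  maxset (@pp_clique d n) K.

Definition lin_indep (R : fieldType) (V : finType) (S : seq {ffun V -> int}) : Prop :=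
  uniq S /\
  forall c : {ffun V -> int} -> R,
    (forall v : V, (\sum_(phi <- S) c phi * (phi v)%:~R)%R = 0%R) ->
    forall phi, phi \in S -> c phi = 0%R.

(* Main.v *)
Require Import Defs.
From HB Require Import structures.
From mathcomp Require Import all_boot all_order all_algebra all_fingroup.
Import Order.TTheory GRing.Theory Num.Theory.
Set Implicit Arguments. Unset Strict Implicit. Unset Printing Implicit Defensive.

Lemma vt_inj d n (x y : ppvert d n) :
  (forall i, tnth (val x) i = tnth (val y) i) -> x = y.
Proof. by move=> h; apply: val_inj; apply: eq_from_tnth. Qed.

Definition line d n (x : ppvert d n) (i : 'I_d) : {set ppvert d n} :=
  [set y | [forall k, (k != i) ==> (tnth (val y) k == tnth (val x) k)]].

Lemma adjP d n (x y : ppvert d n) : pp_adj x y ->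
  exists i, tnth (val x) i != tnth (val y) i /\
    forall k, k != i -> tnth (val x) k = tnth (val y) k.
Proof.
rewrite /pp_adj -cardsE => /cards1P [i Hi].
exists i; split.
  by have := set11 i; rewrite -Hi inE.
move=> k ki; apply/eqP; apply: contraNT ki => hk.
have : k \in [set i0 in [pred i0 | tnth (val x) i0 != tnth (val y) i0]] by rewrite inE.
by rewrite Hi inE.
Qed.

Lemma line_clique d n (x : ppvert d n) i : pp_clique (line x i).
Proof.
apply/forallP => y; apply/implyP => hy; apply/forallP => z; apply/implyP => hz.
apply/implyP => yz.
rewrite /pp_adj; apply/eqP. rewrite -(card1 i). apply: eq_card => k; rewrite !inE.
move: hy hz; rewrite !inE => /forallP hy /forallP hz.
have [-> | ki] := eqVneq k i.
  apply: contra yz => /eqP e; apply/eqP/vt_inj => l.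
  have [-> //| li] := eqVneq l i.
  by rewrite (eqP (implyP (hy l) li)) (eqP (implyP (hz l) li)).
by rewrite (eqP (implyP (hy k) ki)) (eqP (implyP (hz k) ki)) eqxx.
Qed.

Definition sett d n (t : d.-tuple 'I_n) (i : 'I_d) (a : 'I_n) : d.-tuple 'I_n :=
  [tuple if j == i then a else tnth t j | j < d].

Lemma tnth_sett d n (t : d.-tuple 'I_n) i a j :
  tnth (sett t i a) j = if j == i then a else tnth t j.
Proof. by rewrite tnth_mktuple. Qed.

Lemma uniq_sett d n (t : d.-tuple 'I_n) i a :
  uniq t -> a \notin t -> uniq (sett t i a).
Proof.
move=> /tuple_uniqP ut at0; apply/tuple_uniqP => j1 j2; rewrite !tnth_sett.
case: eqP => [->|h1]; case: eqP => [->|h2] //.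
- by move=> e; move: at0; rewrite e mem_tnth.
- by move=> e; move: at0; rewrite -e mem_tnth.
- exact: ut.
Qed.

Definition setv d n (x : ppvert d n) (i : 'I_d) (a : 'I_n) (h : a \notin val x)
  : ppvert d n :=
  @exist (d.-tuple 'I_n) (fun t => uniq t) (sett (val x) i a) (uniq_sett i (valP x) h).

Lemma tnth_setv d n (x : ppvert d n) i a (h : a \notin val x) j :
  tnth (val (setv i h)) j = if j == i then a else tnth (val x) j.
Proof. exact: tnth_sett. Qed.

Lemma clique_elim d n (K : {set ppvert d n}) : pp_clique K ->
  forall u v, u \in K -> v \in K -> u != v -> pp_adj u v.
Proof.
move=> cK u v uK vK uv.
by have /forallP/(_ u)/implyP/(_ uK)/forallP/(_ v)/implyP/(_ vK)/implyP/(_ uv) := cK.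
Qed.

Lemma maxclique_line d n (K : {set ppvert d n}) (x : ppvert d n) :
  (0 < d)%N -> (d < n)%N -> pp_maxclique K -> x \in K -> exists i, K = line x i.
Proof.
move=> d0 dn /maxsetP [cK maxK] xK.
have cl := clique_elim cK.
pose i0 : 'I_d := Ordinal d0.
have hc : #|val x| = d by have /card_uniqP -> := valP x; rewrite size_tuple.
have [a Ha] : exists a, a \notin val x.
  have : (0 < #|[predC (val x)]|)%N.
    by rewrite -(ltn_add2l #|val x|) addn0 cardC card_ord hc.
  by case/card_gt0P => a; rewrite inE => Ha; exists a.
have lineE : forall v j, (v \in line x j) = [forall k, (k != j) ==> (tnth (val v) k == tnth (val x) k)].
  by move=> v j; rewrite inE.
have xL : forall j, x \in line x j by move=> j; rewrite lineE; apply/forallP => k; apply/implyP.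
have [/existsP [y /andP [yK yx]] | none] := boolP [exists y, (y \in K) && (y != x)].
  have xy : x != y by rewrite eq_sym.
  have [i [hi hk]] := adjP (cl _ _ xK yK xy).
  exists i; apply/esym/maxK; first exact: line_clique.
  apply/subsetP => z zK; rewrite lineE; apply/forallP => k; apply/implyP => ki.
  have [-> //|zx] := eqVneq z x.
  have xz : x != z by rewrite eq_sym.
  have [j [hj hjk]] := adjP (cl _ _ xK zK xz).
  have [ji|ji] := eqVneq j i.
    by rewrite -(hjk k) //; rewrite ji.
  have zi : tnth (val z) i = tnth (val x) i by rewrite hjk // eq_sym.
  have [zy|zy] := eqVneq z y.
    by move: hi; rewrite -zy zi eqxx.
  have yz : y != z by rewrite eq_sym.
  have [l [hl hlk]] := adjP (cl _ _ yK zK yz).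
  exfalso.
  have li : l = i.
    apply/eqP; apply: contraNT hi => li; rewrite (hlk i) ?zi //; by rewrite eq_sym.
  have lj : l = j.
    apply/eqP; apply: contraNT hj => lj. rewrite (hk j) ?(hlk j) //; by rewrite eq_sym.
  by move: ji; rewrite -lj li eqxx.
have KL : K = line x i0.
  apply/esym/maxK; first exact: line_clique.
  apply/subsetP => z zK; have : ~~ ((z \in K) && (z != x)) by apply: contraNN none => h; apply/existsP; exists z.
  by rewrite zK /= negbK => /eqP ->.
have : setv i0 Ha \in K.
  rewrite KL lineE; apply/forallP => k; apply/implyP => k0; by rewrite tnth_setv (negbTE k0).
move=> hK; move: none; rewrite negb_exists => /forallP /(_ (setv i0 Ha)).
rewrite hK /= negbK => /eqP e.
have := mem_tnth i0 (val (setv i0 Ha)); rewrite tnth_setv eqxx e => h.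
by case: (negP Ha h).
Qed.

Definition allin d n (T : {set 'I_n}) (x : ppvert d n) :=
  [forall k, tnth (val x) k \in T].
Definition pk d n (T : {set 'I_n}) (x : ppvert d n) := [pick a in T | a \notin val x].
Definition ext d n (T : {set 'I_n}) (x : ppvert d n) (k : 'I_d.+1) : int :=
  match unlift ord_max k with
  | Some j => (tnth (val x) j : nat)%:Z
  | None => if pk T x is Some a then (a : nat)%:Z else 0%R
  end.
Definition Mx d n (T : {set 'I_n}) (x : ppvert d n) : 'M[int]_d.+1 :=
  \matrix_(k, j) ((ext T x k) ^+ j)%R.
Definition phi d n (T : {set 'I_n}) (x : ppvert d n) : int :=
  if allin T x then sgz (\det (Mx T x)) else 0%R.

Lemma pk_spec d n (T : {set 'I_n}) (x : ppvert d n) : allin T x -> #|T| = d.+1 ->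
  exists m, [/\ pk T x = Some m, m \in T, m \notin val x &
    forall a, a \in T -> a \notin val x -> a = m].
Proof.
move=> /forallP hx hT.
have hc : #|[set a in val x]| = d.
  by rewrite cardsE; have /card_uniqP -> := valP x; rewrite size_tuple.
have sub : [set a in val x] \subset T.
  by apply/subsetP => a; rewrite inE => /tnthP [k ->]; exact: hx.
have : #|T :\: [set a in val x]| == 1 by rewrite cardsD (setIidPr sub) hc hT subSnn.
case/cards1P => m hm.
have key : forall a, (a \in T) && (a \notin val x) = (a == m).
  by move=> a; rewrite -in_set1 -hm !inE andbC.
exists m; split.
- rewrite /pk; case: pickP => [b hb | h].
    by congr Some; apply/eqP; rewrite -key.
  by have := h m; rewrite key eqxx.
- by have := key m; rewrite eqxx => /andP [].
- by have := key m; rewrite eqxx => /andP [].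
- by move=> a aT ax; apply/eqP; rewrite -key aT ax.
Qed.

Lemma det_neq0 d n (T : {set 'I_n}) (x : ppvert d n) :
  allin T x -> #|T| = d.+1 -> (\det (Mx T x) != 0)%R.
Proof.
move=> ha hT; have [m [hp mT mx _]] := pk_spec ha hT.
have inj : injective (ext T x).
  move=> k1 k2; rewrite /ext hp.
  case: unliftP => [j1 ->|->]; case: unliftP => [j2 ->|->] //.
  - move=> /eqP; rewrite eqz_nat => /eqP /ord_inj /(tuple_uniqP _ (valP x)) -> //.
  - move=> /eqP; rewrite eqz_nat => /eqP /ord_inj e.
    by move: mx; rewrite -e mem_tnth.
  - move=> /eqP; rewrite eqz_nat => /eqP /ord_inj e.
    by move: mx; rewrite e mem_tnth.
have -> : Mx T x = ((Vandermonde d.+1 (\row_k ext T x k))^T)%R.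
  by apply/matrixP => i j; rewrite !mxE.
rewrite det_tr det_Vandermonde; apply/prodf_neq0 => i _; apply/prodf_neq0 => j ij.
rewrite !mxE subr_eq0; apply/eqP => /inj e; by move: ij; rewrite e ltnn.
Qed.

Lemma phi_swap d n (T : {set 'I_n}) (u : ppvert d n) i m (hT : #|T| = d.+1)
  (ha : allin T u) (hm : pk T u = Some m) (mT : m \in T) (hmu : m \notin val u) :
  allin T (setv i hmu) /\ phi T (setv i hmu) = (- phi T u)%R.
Proof.
set w := setv i hmu.
have /forallP hu := ha.
have haw : allin T w.
  by apply/forallP => k; rewrite tnth_setv; case: eqP.
split => //.
have [m' [hp' m'T m'w um']] := pk_spec haw hT.
have e' : tnth (val u) i = m'.
  apply: um' => //; apply/negP => /tnthP [k].
  rewrite tnth_setv; case: eqP => [_ e|ki /(tuple_uniqP _ (valP u)) e].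
    by move: (hmu); rewrite -e mem_tnth.
  by apply: ki.
have hext : forall k, ext T w k = ext T u (tperm (lift ord_max i) ord_max k).
  move=> k; rewrite /ext hp' hm.
  case: (unliftP ord_max k) => [j ->|->].
    rewrite /w tnth_setv.
    have [ji|ji] := eqVneq j i.
      by rewrite ji tpermL unlift_none.
    rewrite tpermD ?liftK //; last by apply: neq_lift.
    by apply: contra ji => /eqP /lift_inj ->.
  by rewrite tpermR liftK e'.
rewrite /phi ha haw.
have -> : Mx T w = row_perm (tperm (lift ord_max i) ord_max) (Mx T u).
  by apply/matrixP => k j; rewrite !mxE hext.
rewrite row_permE det_mulmx det_perm odd_tperm.
rewrite eq_sym neq_lift expr1 mulN1r; exact: sgzN.
Qed.

Lemma line_sum d n (T : {set 'I_n}) (x : ppvert d n) i : #|T| = d.+1 ->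
  (\sum_(v in line x i) phi T v)%R = 0%R.
Proof.
move=> hT.
have [/existsP [u /andP [uL pu]] | none] :=
  boolP [exists u, (u \in line x i) && (phi T u != 0%R)]; last first.
  apply: big1 => v vL; apply/eqP; apply: contraNT none => pv.
  by apply/existsP; exists v; rewrite vL.
have ha : allin T u by move: pu; rewrite /phi; case: (allin T u).
have [m [hp mT mu uniqm]] := pk_spec ha hT.
have [haw pw] := phi_swap i hT ha hp mT mu.
have lineE : forall v, (v \in line x i) = [forall k, (k != i) ==> (tnth (val v) k == tnth (val x) k)].
  by move=> v; rewrite inE.
have /forallP uL' : [forall k, (k != i) ==> (tnth (val u) k == tnth (val x) k)] by rewrite -lineE.
have wL : setv i mu \in line x i.
  rewrite lineE; apply/forallP => k; apply/implyP => ki.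
  by rewrite tnth_setv (negbTE ki); exact: (implyP (uL' k) ki).
have wu : setv i mu != u.
  apply/eqP => e; have := tnth_setv i mu i; rewrite e eqxx => h.
  by move: (mu); rewrite -h mem_tnth.
rewrite (bigD1 u) //= (bigD1 (setv i mu)) /=; last by rewrite wL wu.
rewrite big1 ?addr0 ?pw ?addrN //.
move=> v /andP [/andP [vL vu] vw].
apply/eqP; apply: contraNT vu => pv.
have hav : allin T v by move: pv; rewrite /phi; case: (allin T v).
have /forallP vL' : [forall k, (k != i) ==> (tnth (val v) k == tnth (val x) k)] by rewrite -lineE.
have same : forall k, k != i -> tnth (val v) k = tnth (val u) k.
  by move=> k ki; rewrite (eqP (implyP (vL' k) ki)) (eqP (implyP (uL' k) ki)).
have [vi|vi] := eqVneq (tnth (val v) i) (tnth (val u) i).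
  apply/eqP/vt_inj => k; have [->//|ki] := eqVneq k i; exact: same.
have vim : tnth (val v) i = m.
  apply: uniqm; first by move/forallP: hav; apply.
  apply/negP => /tnthP [k hk].
  have [ki|ki] := eqVneq k i; first by move: vi; rewrite hk ki eqxx.
  move: hk; rewrite -same // => /(tuple_uniqP _ (valP v)) e.
  by move: ki; rewrite e eqxx.
case/negP: vw; apply/eqP/vt_inj => k; rewrite tnth_setv.
by case: eqP => [->|/eqP ki] //; exact: same.
Qed.

Lemma xU_ex d n (U : {set 'I_n}) : #|U| = d ->
  exists x : ppvert d n, forall a, (a \in val x) = (a \in U).
Proof.
move=> hU.
have hs : size (enum U) == d by rewrite -cardE hU.
exists (@exist (d.-tuple 'I_n) (fun t => uniq t) (Tuple hs) (enum_uniq (mem U))).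
by move=> a; rewrite /= mem_enum.
Qed.

Lemma cardU1 n (mx : 'I_n) (U : {set 'I_n}) d : #|U| = d -> mx \notin U -> #|mx |: U| = d.+1.
Proof. by move=> hU hm; rewrite cardsU1 hm hU. Qed.

Lemma diag d n (mx : 'I_n) (U U' : {set 'I_n}) (x : ppvert d n) :
  #|U| = d -> #|U'| = d -> mx \notin U -> mx \notin U' ->
  (forall a, (a \in val x) = (a \in U)) -> phi (mx |: U') x != 0%R -> U' = U.
Proof.
move=> hU hU' mU mU' hx.
rewrite /phi; case: ifP => [/forallP ha _|]; last by rewrite eqxx.
apply/esym/eqP; rewrite eqEcard hU hU' leqnn andbT.
apply/subsetP => a aU.
have : a \in val x by rewrite hx.
case/tnthP => k ->; have := ha k; rewrite in_setU1 => /orP [/eqP e|//].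
by move: mU; rewrite -e -hx mem_tnth.
Qed.

Lemma diag_self d n (mx : 'I_n) (U : {set 'I_n}) (x : ppvert d n) :
  #|U| = d -> mx \notin U ->
  (forall a, (a \in val x) = (a \in U)) -> phi (mx |: U) x != 0%R.
Proof.
move=> hU mU hx.
have ha : allin (mx |: U) x.
  by apply/forallP => k; rewrite in_setU1 -hx mem_tnth orbT.
by rewrite /phi ha sgz_eq0 (det_neq0 ha (cardU1 hU mU)).
Qed.

Lemma phi_vals d n (T : {set 'I_n}) (x : ppvert d n) : phi T x \in [:: (-1)%R; 0%R; 1%R].
Proof. by rewrite /phi /sgz; case: ifP => //; case: ifP => //; case: ifP. Qed.

Theorem mainTheorem5 (R : realFieldType) (d n : nat) (hd : (1 <= d)%N) (hdn : (d < n)%N) :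
  exists F : seq {ffun ppvert d n -> int},
    [/\ (forall phi, phi \in F -> forall v, phi v \in [:: (-1)%R; 0%R; 1%R]),
        (forall phi, phi \in F ->
           (exists v, phi v = (-1)%R) /\ (exists v, phi v = 1%R)),
        (forall phi, phi \in F -> forall K : {set ppvert d n},
           pp_maxclique K -> (\sum_(v in K) phi v)%R = 0%R) &
        (exists S : seq {ffun ppvert d n -> int},
           {subset S <= F} /\ size S = 'C(n.-1, d) /\ lin_indep R S)].
Proof.
case: n hdn => [//|n'] hdn.
pose mx : 'I_n'.+1 := ord_max.
pose Us := enum [set U : {set 'I_n'.+1} | U \subset [set~ mx] & #|U| == d].
have UsP : forall U, U \in Us -> #|U| = d /\ mx \notin U.
  move=> U; rewrite mem_enum inE => /andP [/subsetP s /eqP h]; split => //.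
  by apply/negP => /s; rewrite !inE eqxx.
pose f U := [ffun x => phi (mx |: U) x] : {ffun ppvert d n'.+1 -> int}.
exists [seq f U | U <- Us]; split.
- move=> p /mapP [U _ ->] v; rewrite ffunE; exact: phi_vals.
- move=> p /mapP [U UU ->]; have [hU mU] := UsP U UU.
  have [x hx] := xU_ex (n := n'.+1) hU.
  have nz := diag_self hU mU hx.
  have ha : allin (mx |: U) x by move: nz; rewrite /phi; case: (allin _ x).
  have [m [hp mT mu _]] := pk_spec ha (cardU1 hU mU).
  have [_ pw] := phi_swap (Ordinal hd) (cardU1 hU mU) ha hp mT mu.
  move: nz pw (phi_vals (mx |: U) x).
  rewrite !inE => nz pw /orP [/eqP e | /orP [/eqP e | /eqP e]].
  + split; first by exists x; rewrite ffunE.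
    by exists (setv (Ordinal hd) mu); rewrite ffunE pw e opprK.
  + by rewrite e eqxx in nz.
  + split; last by exists x; rewrite ffunE.
    by exists (setv (Ordinal hd) mu); rewrite ffunE pw e.
- move=> p /mapP [U UU ->] K hK; have [hU mU] := UsP U UU.
  have [K0|/set0Pn [x xK]] := eqVneq K set0; first by rewrite K0 big_set0.
  have [i ->] := maxclique_line hd hdn hK xK.
  under eq_bigr => v _ do rewrite ffunE.
  exact: line_sum (cardU1 hU mU).
exists [seq f U | U <- Us]; split => //; split.
  by rewrite size_map -cardE cards_draws cardsC1 card_ord.
split.
  rewrite map_inj_in_uniq ?enum_uniq // => U U' UU UU' e.
  have [hU mU] := UsP U UU; have [hU' mU'] := UsP U' UU'.
  have [x hx] := xU_ex (n := n'.+1) hU.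
  have e' : f U x = f U' x by rewrite e.
  rewrite !ffunE in e'.
  apply/esym/(diag hU hU' mU mU' hx); rewrite -e'; exact: diag_self hU mU hx.
move=> c hc p /mapP [U UU ->]; have [hU mU] := UsP U UU.
have [x hx] := xU_ex (n := n'.+1) hU.
have nz := diag_self hU mU hx.
have := hc x; rewrite big_map (bigD1_seq U) ?enum_uniq //=.
rewrite big1_seq => [|U' /andP [U'U U'in]]; last first.
  have [hU' mU'] := UsP U' U'in.
  have h0 : phi (mx |: U') x == 0%R.
    apply: contraNT U'U => h; apply/eqP; exact: (diag hU hU' mU mU' hx h).
  by rewrite ffunE (eqP h0) mulr0z mulr0.
rewrite addr0 => /eqP; rewrite mulf_eq0 intr_eq0 ffunE (negbTE nz) orbF => /eqP.
done.
Qed.
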